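(* Let $A$ be a commutative ring and $\sigma$ a hereditary torsion theory on $A$-modules of finite type. The following are equivalent: (a) $A$ is totally $\sigma$-artinian; (b) $\mathcal{K}(\sigma)=\mathcal{C}(\sigma)$, this set is finite, and $A$ is totally $\sigma_{A\setminus\mathfrak{p}}$-artinian for every $\mathfrak{p}\in\mathcal{C}(\sigma)$.
   Context: $\mathcal{L}(\tau)$ denotes the Gabriel filter of a hereditary torsion theory $\tau$. $\sigma$ is of finite type if every ideal in $\mathcal{L}(\sigma)$ contains a finitely generated ideal in $\mathcal{L}(\sigma)$. $A$ is totally $\tau$-artinian if for every descending chain of ideals $\mathfrak{a}_1\supseteq\mathfrak{a}_2\supseteq\cdots$ there exist $m$ and $\mathfrak{h}\in\mathcal{L}(\tau)$ with $\mathfrak{a}_m\mathfrak{h}\subseteq\mathfrak{a}_s$ for all $s\ge m$. For a prime $\mathfrak{p}$, $\sigma_{A\setminus\mathfrak{p}}$ has Gabriel filter $\{\mathfrak{a}:\mathfrak{a}\not\subseteq\mathfrak{p}\}$. $\mathcal{K}(\sigma)$ is the set of primes $\mathfrak{p}$ with $\mathfrak{p}\notin\mathcal{L}(\sigma)$, and $\mathcal{C}(\sigma)$ is the set of maximal elements of $\mathcal{K}(\sigma)$. *)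

(* Defs.v *)
From HB Require Import structures.
From mathcomp Require Import all_boot all_order all_algebra.
Set Implicit Arguments. Unset Strict Implicit. Unset Printing Implicit Defensive.
Import GRing.Theory.
Local Open Scope ring_scope.

Section Ideals.
Variable A : comPzRingType.

Definition is_ideal (I : A -> Prop) : Prop :=
  [/\ I 0, (forall x y, I x -> I y -> I (x + y)) & (forall r x, I x -> I (r * x))].

Definition subid (I J : A -> Prop) : Prop := forall x, I x -> J x.

Definition ideal_eq (I J : A -> Prop) : Prop := forall x, I x <-> J x.

Definition ideal_mul (I J : A -> Prop) : A -> Prop := fun z =>
  exists s : seq (A * A), (forall p, p \in s -> I p.1 /\ J p.2) /\
    z = \sum_(p <- s) p.1 * p.2.

Definition ideal_cap (I J : A -> Prop) : A -> Prop := fun z => I z /\ J z.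

Definition ideal_colon (I : A -> Prop) (x : A) : A -> Prop := fun r => I (r * x).

Definition fin_gen (I : A -> Prop) : Prop :=
  exists s : seq A, forall x,
    I x <-> exists c : 'I_(size s) -> A, x = \sum_(i < size s) c i * s`_i.

Definition prime_ideal (P : A -> Prop) : Prop :=
  [/\ is_ideal P, ~ P 1 & forall x y, P (x * y) -> P x \/ P y].

(* Gabriel filter (Stenstrom, Rings of Quotients, VI.5, axioms T1-T4):
   hereditary torsion theories on A-Mod correspond bijectively to these,
   so a hereditary torsion theory sigma is represented by its filter L(sigma). *)
Definition gabriel_filter (L : (A -> Prop) -> Prop) : Prop :=
  (forall I, L I -> is_ideal I) /\ L (fun _ => True) /\
  [/\ (forall I J, L I -> is_ideal J -> subid I J -> L J),
      (forall I J, L I -> L J -> L (ideal_cap I J)),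
      (forall I x, L I -> L (ideal_colon I x)) &
      (forall I J, is_ideal I -> L J ->
         (forall x, J x -> L (ideal_colon I x)) -> L I)].

Definition finite_type (L : (A -> Prop) -> Prop) : Prop :=
  forall I, L I -> exists J, [/\ fin_gen J, is_ideal J, L J & subid J I].

Definition totally_artinian (L : (A -> Prop) -> Prop) : Prop :=
  forall a : nat -> A -> Prop,
    (forall n, is_ideal (a n)) -> (forall n, subid (a n.+1) (a n)) ->
    exists m, exists h, L h /\ forall s, (m <= s)%N -> subid (ideal_mul (a m) h) (a s).

(* Gabriel filter of sigma_{A \ p} *)
Definition filt_compl (P : A -> Prop) : (A -> Prop) -> Prop :=
  fun I => is_ideal I /\ ~ subid I P.

Definition Kset (L : (A -> Prop) -> Prop) (P : A -> Prop) : Prop :=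
  prime_ideal P /\ ~ L P.

Definition Cset (L : (A -> Prop) -> Prop) (P : A -> Prop) : Prop :=
  Kset L P /\ forall Q, Kset L Q -> subid P Q -> ideal_eq P Q.

Definition finite_idset (S : (A -> Prop) -> Prop) : Prop :=
  exists l : seq (A -> Prop), forall P, S P -> exists2 i, (i < size l)%N & ideal_eq P (nth (fun _ => False) l i).

End Ideals.

(* Main.v *)
Require Import Defs.
From mathcomp Require Import all_boot all_order all_algebra.
From mathcomp Require Import boolp ring.
From mathcomp Require classical_sets.
Set Implicit Arguments. Unset Strict Implicit. Unset Printing Implicit Defensive.
Import GRing.Theory.
Local Open Scope ring_scope.

Lemma id0 (A : comPzRingType) (I : A -> Prop) : is_ideal I -> I 0.
Proof. by case. Qed.
Lemma idD (A : comPzRingType) (I : A -> Prop) x y : is_ideal I -> I x -> I y -> I (x + y).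
Proof. by case=> _ h _; apply: h. Qed.
Lemma idM (A : comPzRingType) (I : A -> Prop) r x : is_ideal I -> I x -> I (r * x).
Proof. by case=> _ _ h; apply: h. Qed.
Lemma idMr (A : comPzRingType) (I : A -> Prop) r x : is_ideal I -> I x -> I (x * r).
Proof. by rewrite mulrC; apply: idM. Qed.
Lemma idN (A : comPzRingType) (I : A -> Prop) x : is_ideal I -> I x -> I (- x).
Proof. by rewrite -mulN1r; apply: idM. Qed.

Lemma id_sum (A : comPzRingType) (I : A -> Prop) (T : eqType) (s : seq T) (F : T -> A) :
  is_ideal I -> (forall t, t \in s -> I (F t)) -> I (\sum_(t <- s) F t).
Proof.
move=> hI hF; rewrite big_seq; apply: (big_ind I) => //; first exact: id0.
by move=> x y; apply: idD.
Qed.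

Lemma id_sumo (A : comPzRingType) (I : A -> Prop) n (F : 'I_n -> A) :
  is_ideal I -> (forall i, I (F i)) -> I (\sum_(i < n) F i).
Proof.
move=> hI hF; apply: (big_ind I) => //; first exact: id0.
by move=> x y; apply: idD.
Qed.

Lemma mul_sub (A : comPzRingType) (I J K : A -> Prop) :
  is_ideal K -> (forall x y, I x -> J y -> K (x * y)) -> subid (ideal_mul I J) K.
Proof.
move=> hK h z [s [hs ->]]; apply: id_sum => // p /hs [] ; exact: h.
Qed.

Lemma mul_mem (A : comPzRingType) (I J : A -> Prop) x y :
  I x -> J y -> ideal_mul I J (x * y).
Proof.
move=> Ix Jy; exists [:: (x, y)]; split; last by rewrite big_cons big_nil addr0.
by move=> p; rewrite inE => /eqP ->.
Qed.

Lemma chain_mono (A : comPzRingType) (a : nat -> A -> Prop) :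
  (forall n, subid (a n.+1) (a n)) -> forall m n, (m <= n)%N -> subid (a n) (a m).
Proof.
move=> ha m n /subnK <-; elim: (n - m)%N => [|k IH] x //.
by rewrite addSn => /ha; apply: IH.
Qed.

Lemma up (A : comPzRingType) (L : (A -> Prop) -> Prop) I J :
  gabriel_filter L -> L I -> is_ideal J -> subid I J -> L J.
Proof. by case=> _ [_ [hu _ _ _]]; apply: hu. Qed.

Lemma prime_pow (A : comPzRingType) (P : A -> Prop) x n :
  prime_ideal P -> ~ P x -> ~ P (x ^+ n).
Proof.
case=> hI h1 hp nx; elim: n => [|n IH]; first by rewrite expr0.
by rewrite exprS => /hp [].
Qed.

Lemma two_prime (A : comPzRingType) (I J P : A -> Prop) :
  prime_ideal P -> (forall x y, I x -> J y -> P (x * y)) -> subid I P \/ subid J P.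
Proof.
move=> [hP _ hp] H; case: (pselect (subid I P)) => [|nI]; [by left|right].
move=> y Jy; case: (pselect (P y)) => // nPy; exfalso; apply: nI => x Ix.
by case/hp: (H _ _ Ix Jy) => // /nPy.
Qed.

Lemma colon_ideal (A : comPzRingType) (I : A -> Prop) z :
  is_ideal I -> is_ideal (ideal_colon I z).
Proof.
move=> hI; split; rewrite /ideal_colon.
- by rewrite mul0r; apply: id0.
- by move=> x y hx hy; rewrite mulrDl; apply: idD.
- by move=> r x hx; rewrite -mulrA; apply: idM.
Qed.

Definition Jz (A : comPzRingType) (q : A -> Prop) (z : A) : A -> Prop :=
  fun w => exists b r, q b /\ w = b + r * z.

Lemma Jz_ideal (A : comPzRingType) (q : A -> Prop) z : is_ideal q -> is_ideal (Jz q z).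
Proof.
move=> hq; split.
- by exists 0, 0; split; [apply: id0|rewrite mul0r addr0].
- move=> x y [b [r [qb ->]]] [b' [r' [qb' ->]]]; exists (b + b'), (r + r'); split.
    exact: idD.
  by ring.
- move=> s x [b [r [qb ->]]]; exists (s * b), (s * r); split; first exact: idM.
  by ring.
Qed.

Lemma Jz_sub (A : comPzRingType) (q : A -> Prop) z : subid q (Jz q z).
Proof. by move=> x qx; exists x, 0; rewrite mul0r addr0. Qed.

Lemma Jz_mem (A : comPzRingType) (q : A -> Prop) z : is_ideal q -> Jz q z z.
Proof. by move=> hq; exists 0, 1; rewrite mul1r add0r; split => //; apply: id0. Qed.

Lemma gen_mem (A : comPzRingType) (J : A -> Prop) (s : seq A) i :
  (forall x, J x <-> exists c : 'I_(size s) -> A, x = \sum_(i < size s) c i * s`_i) ->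
  (i < size s)%N -> J s`_i.
Proof.
move=> hs Hi; apply/hs; exists (fun j : 'I_(size s) => if val j == i then 1 else 0).
rewrite (bigD1 (Ordinal Hi)) //= eqxx mul1r big1 ?addr0 //.
by move=> j; rewrite -val_eqE /= => /negbTE ->; rewrite mul0r.
Qed.

Lemma exists_prime (A : comPzRingType) (L : (A -> Prop) -> Prop) (h : A -> Prop) :
  gabriel_filter L -> finite_type L -> is_ideal h -> ~ L h ->
  exists q, [/\ prime_ideal q, ~ L q & subid h q].
Proof.
move=> gL fL hh nLh.
pose T := {I : A -> Prop | [/\ is_ideal I, subid h I & ~ L I]}.
pose t0 : T := exist _ h (And3 hh (fun _ x => x) nLh).
pose R (s t : T) := `[< subid (sval s) (sval t) >].
have [t tmax] : exists t, classical_sets.premaximal R t.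
  apply: (classical_sets.ZL_preorder t0).
  - by move=> s; apply/asboolP.
  - by move=> r s u /asboolP rs /asboolP su; apply/asboolP => x /rs /su.
  move=> C Ctot.
  case: (pselect (exists t, C t)) => [[a0 Ca0]|nC]; last first.
    by exists t0 => s Cs; exfalso; apply: nC; exists s.
  pose U x := exists t, C t /\ sval t x.
  have comb : forall t1 t2, C t1 -> C t2 -> exists t, [/\ C t, subid (sval t1) (sval t) & subid (sval t2) (sval t)].
    move=> t1 t2 C1 C2; case: (Ctot t1 t2 C1 C2) => /asboolP H.
      by exists t2; split.
    by exists t1; split.
  have hU : is_ideal U.
    split.
    - by exists a0; split => //; case: (svalP a0) => + _ _; apply: id0.
    - move=> x y [t1 [C1 x1]] [t2 [C2 y2]]; case: (comb t1 t2 C1 C2) => u [Cu s1 s2].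
      exists u; split => //; case: (svalP u) => hu _ _; apply: idD => //; [exact: s1|exact: s2].
    - move=> r x [t1 [C1 x1]]; exists t1; split => //; case: (svalP t1) => hu _ _.
      exact: idM.
  have hhU : subid h U.
    by move=> x hx; exists a0; split => //; case: (svalP a0) => _ + _; apply.
  have nLU : ~ L U.
    move=> LU; case: (fL _ LU) => J [[s hs] hJ LJ JU].
    have cl : forall k, exists t, C t /\ forall i, (i < k)%N -> (i < size s)%N -> sval t s`_i.
      elim=> [|k [t1 [C1 H1]]]; first by exists a0; split.
      case: (ltnP k (size s)) => Hk; last first.
        exists t1; split => // i; rewrite ltnS leq_eqVlt => /orP [/eqP -> Hs|]; last exact: H1.
        by rewrite ltnNge Hk in Hs.
      case: (JU _ (gen_mem hs Hk)) => t2 [C2 x2].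
      case: (comb t1 t2 C1 C2) => u [Cu s1 s2]; exists u; split => // i.
      rewrite ltnS leq_eqVlt => /orP [/eqP -> _|]; first exact: s2.
      by move=> ik iS; apply: s1; apply: H1.
    case: (cl (size s)) => u [Cu Hu]; case: (svalP u) => hu _; apply.
    apply: (up gL LJ hu) => x /hs [c ->]; apply: id_sumo => // i.
    by apply: idM => //; apply: Hu; apply: ltn_ord.
  by exists (exist _ U (And3 hU hhU nLU)) => s Cs; apply/asboolP => x sx; exists s.
case: (svalP t) => hq hhq nLq; exists (sval t); split => //; split => //.
  move=> q1; apply: nLq; apply: (up gL (proj1 (proj2 gL)) hq) => x _.
  by rewrite -[x]mulr1; apply: idM.
have maxJ : forall z, ~ sval t z -> L (Jz (sval t) z).
  move=> z nz; apply: contrapT => nL.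
  pose s : T := exist _ (Jz (sval t) z) (And3 (Jz_ideal z hq) (fun x hx => Jz_sub z (hhq x hx)) nL).
  have /tmax /asboolP H : R t s by apply/asboolP; apply: Jz_sub.
  by apply: nz; apply: H; apply: Jz_mem.
move=> x y qxy; case: (pselect (sval t x)) => [|nx]; [by left|right].
apply: contrapT => ny; apply: nLq.
have [_ [_ [_ _ _ T4]]] := gL; apply: (T4 _ _ hq (maxJ x nx)).
move=> w [b [r [qb ->]]]; apply: (up gL (maxJ y ny) (colon_ideal _ hq)).
move=> v [b' [r' [qb' ->]]]; rewrite /ideal_colon.
have -> : (b' + r' * y) * (b + r * x) = (b + r * x) * b' + (r' * y) * b + (r' * r) * (x * y) by ring.
by apply: idD => //; [apply: idD => //; [apply: idM|apply: idM]|apply: idM].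
Qed.

Lemma capn_avoid (A : comPzRingType) (p : nat -> A -> Prop) (P : A -> Prop) n :
  (forall i, is_ideal (p i)) -> prime_ideal P ->
  (forall x, (forall i, (i <= n)%N -> p i x) -> P x) -> exists i, (i <= n)%N /\ subid (p i) P.
Proof.
move=> hp pP; elim: n => [|n IH] H.
  by exists 0%N; split => // x px; apply: H => i; rewrite leqn0 => /eqP ->.
have HH : forall x y, (forall i, (i <= n)%N -> p i x) -> p n.+1 y -> P (x * y).
  move=> x y Ix Jy; apply: H => i; rewrite leq_eqVlt => /orP [/eqP ->|]; first exact: (idM _ (hp _) Jy).
  by rewrite ltnS => Hi; apply: (idMr _ (hp i) (Ix i Hi)).
have [sI|sJ] := two_prime pP HH.
- by case: (IH sI) => i [Hi Hs]; exists i; split => //; apply: (leq_trans Hi).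
- by exists n.+1.
Qed.

Lemma In_nth' (T : Type) (d : T) (Q : T) (l : seq T) :
  List.In Q l -> exists2 i, (i < size l)%N & Q = nth d l i.
Proof.
elim: l => [|x l IH] //= [->|/IH [i Hi ->]]; first by exists 0%N.
by exists i.+1.
Qed.

Lemma ieq_sym (A : comPzRingType) (I J : A -> Prop) : ideal_eq I J -> ideal_eq J I.
Proof. by move=> H x; split => ?; apply (H x). Qed.

Theorem mainTheorem17 (A : comPzRingType) (L : (A -> Prop) -> Prop) :
  gabriel_filter L -> finite_type L ->
  (totally_artinian L <->
   [/\ (forall P, Kset L P <-> Cset L P),
       finite_idset (Cset L) &
       (forall P, Cset L P -> totally_artinian (filt_compl P))]).
Proof.
move=> gL fL.
have Lid : forall I, L I -> is_ideal I := proj1 gL.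
have nLsub : forall P I, ~ L P -> is_ideal P -> L I -> ~ subid I P.
  by move=> P I nP hP LI sIP; apply: nP; apply: (up gL LI hP sIP).
split.
- move=> TA.
  have KC : forall P, Kset L P <-> Cset L P.
    move=> P; split; last by case.
    move=> KP; split => // Q [pQ nLQ] PQ.
    have [pP nLP] := KP; have [hP P1 Pp] := pP; have [hQ Q1 Qp] := pQ.
    move=> x; split; first exact: PQ.
    move=> Qx; apply: contrapT => nPx.
    have hd : forall n, subid (Jz P (x ^+ n.+1)) (Jz P (x ^+ n)).
      move=> n z [b [r [Pb ->]]]; exists b, (r * x); split => //.
      by rewrite exprS mulrA.
    case: (TA _ (fun n => Jz_ideal _ hP) hd) => m [h [Lh H]].
    apply: (nLsub Q h nLQ hQ Lh) => y hy.
    have := H m.+1 (leqnSn m) _ (mul_mem (Jz_mem (x ^+ m) hP) hy).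
    move=> [b [r [Pb E]]].
    have E2 : x ^+ m * (y - r * x) = b.
      by rewrite mulrBr E exprS; ring.
    have : P (x ^+ m * (y - r * x)) by rewrite E2.
    case/Pp => [Pxm|Pyr]; first by exfalso; exact: (prime_pow pP nPx Pxm).
    have -> : y = (y - r * x) + r * x by ring.
    by apply: idD => //; [apply: PQ | apply: idM].
  split => //; last first.
    move=> P [[[hP _ _] nLP] _] a ha hd; case: (TA a ha hd) => m [h [Lh H]].
    by exists m, h; split => //; split; [exact: Lid | exact: nLsub].
  apply: contrapT => nF.
  have ex : forall l : seq (A -> Prop), exists P, Cset L P /\ forall Q, List.In Q l -> ~ ideal_eq P Q.
    move=> l; apply: contrapT => nE; apply: nF; exists l => P CP.
    apply: contrapT => nI; apply: nE; exists P; split => // Q inQ eqPQ.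
    case: (In_nth' (fun _ => False) inQ) => i Hi EQ; apply: nI; exists i => //.
    by rewrite -EQ.
  pose g l := proj1_sig (cid (ex l)).
  have gP : forall l, Cset L (g l) /\ forall Q, List.In Q l -> ~ ideal_eq (g l) Q.
    by move=> l; exact: (proj2_sig (cid (ex l))).
  pose ls := fix ls n := if n is k.+1 then g (ls k) :: ls k else [::].
  pose p n := g (ls n).
  have inls : forall n i, (i < n)%N -> List.In (p i) (ls n).
    elim=> [|n IH] i //; rewrite ltnS leq_eqVlt => /orP [/eqP ->|/IH Hi]; first by left.
    by right.
  have dist : forall n i, (i < n)%N -> ~ ideal_eq (p n) (p i).
    by move=> n i Hi; apply: (proj2 (gP (ls n))); apply: inls.
  have Cp : forall n, Cset L (p n) by move=> n; exact: (proj1 (gP (ls n))).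
  have hp : forall n, is_ideal (p n) by move=> n; case: (Cp n) => [[[]]].
  pose a n := fun x => forall i, (i <= n)%N -> p i x.
  have ha : forall n, is_ideal (a n).
    move=> n; split.
    - by move=> i _; apply: id0.
    - by move=> x y hx hy i Hi; apply: idD => //; [apply: hx|apply: hy].
    - by move=> r x hx i Hi; apply: idM => //; apply: hx.
  have hd : forall n, subid (a n.+1) (a n).
    by move=> n x hx i Hi; apply: hx; apply: (leq_trans Hi).
  case: (TA a ha hd) => m [h [Lh H]].
  have [[pP1 nLP1] _] := Cp m.+1.
  have HH : forall x y, a m x -> h y -> p m.+1 (x * y).
    by move=> x y ax hy; apply: (H m.+1 (leqnSn m)) => //; apply: mul_mem.
  case: (two_prime pP1 HH) => [sa|sh]; last by apply: (nLsub _ _ nLP1 (hp _) Lh).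
  case: (capn_avoid hp pP1 sa) => i [Hi si].
  have [_ maxi] := Cp i.
  apply: (dist m.+1 i (Hi : (i < m.+1)%N)); apply: ieq_sym.
  by apply: maxi => //; split.
- move=> [KC [l Hl] TC] a ha hd.
  pose n := size l.
  pose Q i := exists P, Cset L P /\ ideal_eq P (nth (fun _ => False) l i).
  have ch : forall i, exists mh : nat * (A -> Prop),
      [/\ is_ideal mh.2, (forall s, (mh.1 <= s)%N -> subid (ideal_mul (a mh.1) mh.2) (a s))
        & (Q i -> ~ subid mh.2 (nth (fun _ => False) l i))].
    move=> i; case: (pselect (Q i)) => [[P [CP EP]] | nQ].
      case: (TC P CP a ha hd) => m [h [[hh nsub] H]]; exists (m, h); split => // _ sub.
      by apply: nsub => x /sub; apply: (EP x).2.
    exists (0%N, fun x => x = 0); split => //.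
      split => //; first by move=> x y -> ->; rewrite addr0.
      by move=> r x ->; rewrite mulr0.
    move=> s _ /=; apply: mul_sub; first exact: ha. move=> x y _ ->; rewrite mulr0; exact: (id0 (ha s)).
  pose mh i := proj1_sig (cid (ch i)).
  have mhP : forall i, _ := fun i => proj2_sig (cid (ch i)).
  pose mi i := (mh i).1; pose hi i := (mh i).2.
  have hih : forall i, is_ideal (hi i) by move=> i; case: (mhP i).
  pose m := (\max_(i < n) mi i)%N.
  pose h (x : A) := exists c : 'I_n -> A, (forall i : 'I_n, hi i (c i)) /\ x = \sum_(i < n) c i.
  have hh : is_ideal h.
    split.
    - exists (fun _ => 0); split; first by move=> i; apply: id0.
      by rewrite big1.
    - move=> x y [c [hc ->]] [c' [hc' ->]]; exists (fun i => c i + c' i); split.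
        by move=> i; apply: idD.
      by rewrite big_split.
    - move=> r x [c [hc ->]]; exists (fun i => r * c i); split.
        by move=> i; apply: idM.
      by rewrite mulr_sumr.
  have hisub : forall i : 'I_n, subid (hi i) h.
    move=> i x hx; exists (fun j => if j == i then x else 0); split.
      by move=> j; case: eqP => [->|_] //; exact: (id0 (hih j)).
    rewrite (bigD1 i) //= eqxx big1 ?addr0 // => j /negbTE -> //.
  exists m, h; split.
    apply: contrapT => nLh.
    case: (exists_prime gL fL hh nLh) => q [pq nLq hq].
    have Cq : Cset L q by apply/KC.
    case: (Hl q Cq) => i Hi Eq.
    case: (mhP i) => _ _ /(_ (ex_intro _ q (conj Cq Eq))); apply.
    by move=> x /(hisub (Ordinal Hi)) /hq /(Eq x).1.
  move=> s Hs; apply: mul_sub; first exact: ha. move=> x y am [c [hc ->]].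
  rewrite mulr_sumr; apply: id_sumo => // i.
  have Hmi : (mi i <= m)%N by apply: (leq_bigmax i).
  case: (mhP i) => _ Hi _; apply: (Hi s (leq_trans Hmi Hs)); apply: mul_mem => //.
  exact: (chain_mono hd Hmi).
  exact: hc.
Qed.
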